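(* Let $\mathbf{x},\mathbf{y}$ lie in the upper half-plane and let $\mathbf{B}=\frac12\begin{pmatrix}\mathbf{x}+\mathbf{y}&\mathbf{x}-\mathbf{y}\\ \mathbf{x}-\mathbf{y}&\mathbf{x}+\mathbf{y}\end{pmatrix}$. Then $$\mathcal{F}(\mathbf{B})=\frac14\, f^3(\mathbf{x})f^3(\mathbf{y})\,(\mathrm{Im}\,\mathbf{x})(\mathrm{Im}\,\mathbf{y})\,\left|\vartheta_3^4(\mathbf{x})\vartheta_4^4(\mathbf{y})-\vartheta_4^4(\mathbf{x})\vartheta_3^4(\mathbf{y})\right|,$$ where $f(\sigma)=(\mathrm{Im}\,\sigma)^{1/2}|\vartheta_2(\sigma)\vartheta_3(\sigma)\vartheta_4(\sigma)|^{2/3}$.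
   Context: $\mathcal{F}(\mathbf{B})=(\det\mathrm{Im}\,\mathbf{B})^{5/2}\prod_{s=1}^{10}|\Theta[\beta_s](\mathbf{B})|$, where for $\mathbf{p},\mathbf{q}\in\{0,\frac12\}^2$, $\Theta[^{\mathbf{p}}_{\mathbf{q}}](\mathbf{B})=\sum_{\mathbf{m}\in\mathbb{Z}^2}\exp\{\pi i\langle\mathbf{B}(\mathbf{m}+\mathbf{p}),\mathbf{m}+\mathbf{p}\rangle+2\pi i\langle\mathbf{m}+\mathbf{p},\mathbf{q}\rangle\}$, and $\beta_1,\dots,\beta_{10}$ are the ten even characteristics ($4\langle\mathbf{p},\mathbf{q}\rangle$ even). The genus one theta constants are $\vartheta_2(\sigma)=\sum_{n\in\mathbb{Z}}e^{\pi i\sigma(n+1/2)^2}$, $\vartheta_3(\sigma)=\sum_{n}e^{\pi i\sigma n^2}$, $\vartheta_4(\sigma)=\sum_n(-1)^ne^{\pi i\sigma n^2}$. *)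

(* Defs.v *)
From Stdlib Require Import Reals List.
From Coquelicot Require Import Coquelicot.
Import ListNotations.
Open Scope R_scope.
Open Scope C_scope.

Definition cexp (z : C) : C :=
  (exp (Re z) * cos (Im z), exp (Re z) * sin (Im z))%R.

(* real power, with the convention 0^y = 0 (used only for y > 0) *)
Definition rpow (x y : R) : R := if Rlt_dec 0 x then Rpower x y else 0%R.

Definition clim (s : nat -> C) : C :=
  (real (Lim_seq (fun N => Re (s N))), real (Lim_seq (fun N => Im (s N)))).

Definition zrange (N : nat) : list Z :=
  map (fun k => (Z.of_nat k - Z.of_nat N)%Z) (seq 0 (2 * N + 1)).

Definition csum (l : list C) : C := fold_right Cplus 0 l.

Definition zsum (g : Z -> C) : C :=
  clim (fun N => csum (map g (zrange N))).

(* sum over m in Z^2, as limit of partial sums over the squares [-N,N]^2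
   (the theta series below converge absolutely) *)
Definition z2sum (g : Z -> Z -> C) : C :=
  clim (fun N => csum (flat_map (fun m1 => map (g m1) (zrange N)) (zrange N))).

Definition theta2 (s : C) : C :=
  zsum (fun n => cexp (PI * Ci * s * RtoC ((IZR n + /2) ^ 2))).
Definition theta3 (s : C) : C :=
  zsum (fun n => cexp (PI * Ci * s * RtoC (IZR n ^ 2))).
Definition theta4 (s : C) : C :=
  zsum (fun n => RtoC (powerRZ (-1) n) * cexp (PI * Ci * s * RtoC (IZR n ^ 2))).

(* a half-integer characteristic entry: b = true means 1/2, false means 0 *)
Definition half (b : bool) : R := if b then (/2)%R else 0%R.

(* genus two theta constant Theta[p;q](B), B = (b11 b12; b21 b22),
   p = (half p1, half p2), q = (half q1, half q2) *)
Definition Theta (b11 b12 b21 b22 : C) (p1 p2 q1 q2 : bool) : C :=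
  z2sum (fun m1 m2 =>
    let v1 := (IZR m1 + half p1)%R in
    let v2 := (IZR m2 + half p2)%R in
    let Q := b11 * RtoC (v1 * v1) + b12 * RtoC (v2 * v1)
           + b21 * RtoC (v1 * v2) + b22 * RtoC (v2 * v2) in
    cexp (PI * Ci * Q + 2 * PI * Ci * RtoC (v1 * half q1 + v2 * half q2))).

Definition all_chars : list (bool * bool * bool * bool) :=
  flat_map (fun p1 => flat_map (fun p2 => flat_map (fun q1 =>
    map (fun q2 => (p1, p2, q1, q2)) [true; false]) [true; false]) [true; false])
    [true; false].

(* even characteristic: 4<p,q> even *)
Definition even_char (c : bool * bool * bool * bool) : bool :=
  let '(p1, p2, q1, q2) := c in negb (xorb (p1 && q1) (p2 && q2)).

Definition even_chars := filter even_char all_chars.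

Definition calF (b11 b12 b21 b22 : C) : R :=
  (rpow (Im b11 * Im b22 - Im b12 * Im b21) (5/2) *
   fold_right Rmult 1
     (map (fun c => let '(p1, p2, q1, q2) := c in
                    Cmod (Theta b11 b12 b21 b22 p1 p2 q1 q2)) even_chars))%R.

Definition fmod (s : C) : R :=
  (rpow (Im s) (1/2) * rpow (Cmod (theta2 s * theta3 s * theta4 s)) (2/3))%R.

(* Main.v *)
Require Import Defs.
From Stdlib Require Import Reals List Lia Lra Psatz ZArith FunctionalExtensionality.
From Coquelicot Require Import Coquelicot.
Import ListNotations.
Open Scope R_scope.

Definition rsum (l : list R) : R := fold_right Rplus 0 l.

Lemma csum_app l1 l2 : csum (l1 ++ l2) = (csum l1 + csum l2)%C.
Proof. induction l1; simpl. ring. rewrite IHl1. ring. Qed.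

Lemma rsum_app l1 l2 : rsum (l1 ++ l2) = rsum l1 + rsum l2.
Proof. induction l1; simpl. ring. rewrite IHl1. ring. Qed.

Lemma csum_map_plus {A} (f g : A -> C) L :
  csum (map (fun a => f a + g a)%C L) = (csum (map f L) + csum (map g L))%C.
Proof. induction L; simpl. ring. rewrite IHL. ring. Qed.

Lemma csum_map_minus {A} (f g : A -> C) L :
  csum (map (fun a => f a - g a)%C L) = (csum (map f L) - csum (map g L))%C.
Proof. induction L; simpl. ring. rewrite IHL. ring. Qed.

Lemma csum_map_scal {A} (c : C) (f : A -> C) L :
  csum (map (fun a => c * f a)%C L) = (c * csum (map f L))%C.
Proof. induction L; simpl. ring. rewrite IHL. ring. Qed.

Lemma csum_map_ext_in {A} (f g : A -> C) L :
  (forall a, In a L -> f a = g a) -> csum (map f L) = csum (map g L).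
Proof. intros H. f_equal. apply map_ext_in. auto. Qed.

Lemma rsum_map_ext_in {A} (f g : A -> R) L :
  (forall a, In a L -> f a = g a) -> rsum (map f L) = rsum (map g L).
Proof. intros H. f_equal. apply map_ext_in. auto. Qed.

Lemma csum_map_zero {A} (f : A -> C) L :
  (forall a, In a L -> f a = 0%C) -> csum (map f L) = 0%C.
Proof. induction L; simpl; intros H. auto. rewrite H by auto. rewrite IHL by auto. ring. Qed.

Lemma rsum_map_le {A} (f g : A -> R) L :
  (forall a, In a L -> f a <= g a) -> rsum (map f L) <= rsum (map g L).
Proof. induction L; simpl; intros H. lra. 
  apply Rplus_le_compat; auto. Qed.

Lemma rsum_map_scal {A} (c : R) (f : A -> R) L :
  rsum (map (fun a => c * f a) L) = c * rsum (map f L).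
Proof. induction L; simpl. ring. rewrite IHL. ring. Qed.

Lemma Cmod_csum_le {A} (f : A -> C) (h : A -> R) L :
  (forall a, In a L -> Cmod (f a) <= h a) -> Cmod (csum (map f L)) <= rsum (map h L).
Proof. induction L; simpl; intros H.
  - rewrite Cmod_0. lra.
  - eapply Rle_trans. apply Cmod_triangle. apply Rplus_le_compat; auto. Qed.

Lemma map_flat_map_prod {A B D} (g : A -> B -> D) (l : list A) (l' : list B) :
  flat_map (fun x => map (g x) l') l = map (fun p => g (fst p) (snd p)) (list_prod l l').
Proof. induction l; simpl. auto. rewrite map_app, IHl, map_map. simpl. auto. Qed.

Lemma csum_prod {A B} (f : A -> C) (g : B -> C) l l' :
  csum (map (fun p => f (fst p) * g (snd p))%C (list_prod l l')) =
  (csum (map f l) * csum (map g l'))%C.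
Proof. induction l; simpl. ring. rewrite map_app, csum_app, IHl, map_map. simpl.
  rewrite csum_map_scal. ring. Qed.

Lemma rsum_prod {A B} (f : A -> R) (g : B -> R) l l' :
  rsum (map (fun p => f (fst p) * g (snd p)) (list_prod l l')) =
  rsum (map f l) * rsum (map g l').
Proof. induction l; simpl. ring. rewrite map_app, rsum_app, IHl, map_map. simpl.
  rewrite rsum_map_scal. ring. Qed.

Lemma NoDup_map_inj {A B} (f : A -> B) l :
  (forall x y, f x = f y -> x = y) -> NoDup l -> NoDup (map f l).
Proof. intros H. apply NoDup_map_NoDup_ForallPairs. intros a b _ _. auto. Qed.

Lemma NoDup_list_prod' {A B} (l : list A) (l' : list B) :
  NoDup l -> NoDup l' -> NoDup (list_prod l l').
Proof. induction l; simpl; intros H1 H2. constructor.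
  inversion H1; subst. apply NoDup_app.
  - apply NoDup_map_inj; auto. intros u v E; inversion E; auto.
  - auto.
  - intros [u v] Hin Hin'. apply in_map_iff in Hin. destruct Hin as [w [E _]]. inversion E; subst.
    apply in_prod_iff in Hin'. tauto. Qed.

Lemma csum_indicator {B} (dec : forall u v : B, {u = v} + {u <> v}) (f : B -> C) c L :
  NoDup L -> In c L -> csum (map (fun b => if dec b c then f b else 0%C) L) = f c.
Proof. induction L; simpl; intros H1 H2. contradiction.
  inversion H1; subst. destruct H2 as [E|E].
  - subst. destruct (dec c c); [|congruence]. rewrite csum_map_zero. ring.
    intros b Hb. destruct (dec b c); auto. subst; contradiction.
  - destruct (dec a c). subst; contradiction. rewrite IHL; auto. ring. Qed.

Lemma reindex {A B} (decB : forall u v : B, {u = v} + {u <> v}) (phi : A -> B) (f : B -> C)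
  (L : list A) (L' : list B) :
  NoDup L -> NoDup L' ->
  (forall a1 a2, In a1 L -> In a2 L -> phi a1 = phi a2 -> a1 = a2) ->
  (forall a, In a L -> In (phi a) L') ->
  csum (map (fun a => f (phi a)) L) =
  csum (map (fun b => if in_dec decB b (map phi L) then f b else 0%C) L').
Proof. induction L as [|a L IH]; simpl; intros H1 H2 Hinj Hin.
  - rewrite csum_map_zero; auto.
  - inversion H1; subst.
    assert (Hn : ~ In (phi a) (map phi L)).
    { intro Hc. apply in_map_iff in Hc. destruct Hc as [a' [E Ha']].
      assert (a' = a) by (apply Hinj; auto). subst. contradiction. }
    rewrite (csum_map_ext_in _ (fun b => (if decB b (phi a) then f b else 0%C) +
        (if in_dec decB b (map phi L) then f b else 0%C))%C).
    + rewrite csum_map_plus, csum_indicator, IH; auto.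
    + intros b _. cbn [map].
      repeat match goal with |- context [if ?d then _ else _] => destruct d end;
        try ring; exfalso; simpl in *; subst; try tauto.
      all: match goal with H : _ \/ _ |- _ => destruct H end; subst; tauto.
Qed.
Lemma zrange_In N m : In m (zrange N) <-> (- Z.of_nat N <= m <= Z.of_nat N)%Z.
Proof. unfold zrange. rewrite in_map_iff. split.
  - intros [k [E H]]. apply in_seq in H. lia.
  - intros H. exists (Z.to_nat (m + Z.of_nat N)). split. lia. apply in_seq. lia. Qed.

Lemma zrange_NoDup N : NoDup (zrange N).
Proof. unfold zrange. apply NoDup_map_inj. intros; lia. apply seq_NoDup. Qed.

Lemma zrange_S N : zrange (S N) = (- Z.of_nat (S N))%Z :: zrange N ++ [Z.of_nat (S N)].
Proof. unfold zrange. replace (2 * S N + 1)%nat with (S (S (2 * N + 1))) by lia.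
  rewrite seq_S. rewrite <- cons_seq. rewrite <- seq_shift. rewrite !map_app, map_cons, map_map.
  rewrite <- app_comm_cons. f_equal. f_equal. apply map_ext. intros; lia. cbn [map]. f_equal. lia. Qed.

Lemma csum_zrange_S (g : Z -> C) N :
  csum (map g (zrange (S N))) = (g (- Z.of_nat (S N))%Z + csum (map g (zrange N)) + g (Z.of_nat (S N)))%C.
Proof. rewrite zrange_S. simpl. rewrite map_app, csum_app. simpl. ring. Qed.

Lemma rsum_zrange_S (g : Z -> R) N :
  rsum (map g (zrange (S N))) = g (- Z.of_nat (S N))%Z + rsum (map g (zrange N)) + g (Z.of_nat (S N)).
Proof. rewrite zrange_S. simpl. rewrite map_app, rsum_app. simpl. ring. Qed.

Lemma csum_zrange_0 (g : Z -> C) : csum (map g (zrange 0)) = g 0%Z.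
Proof. unfold zrange. simpl. ring. Qed.
Lemma rsum_zrange_0 (g : Z -> R) : rsum (map g (zrange 0)) = g 0%Z.
Proof. unfold zrange. simpl. ring. Qed.

Definition box N := list_prod (zrange N) (zrange N).
Lemma box_In N a b : In (a, b) (box N) <->
  (- Z.of_nat N <= a <= Z.of_nat N)%Z /\ (- Z.of_nat N <= b <= Z.of_nat N)%Z.
Proof. unfold box. rewrite in_prod_iff, !zrange_In. tauto. Qed.
Lemma box_NoDup N : NoDup (box N).
Proof. apply NoDup_list_prod'; apply zrange_NoDup. Qed.

Definition ga (s : R) (m : Z) : R := s ^ Z.abs_nat m.

Lemma ga_pos s m : 0 < s -> 0 < ga s m.
Proof. intros; unfold ga; apply pow_lt; auto. Qed.

Lemma geo_total s N : 0 < s < 1 ->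
  rsum (map (ga s) (zrange N)) <= (1 + s) / (1 - s) - 2 * s ^ (S N) / (1 - s).
Proof. intros Hs. induction N.
  - rewrite rsum_zrange_0. unfold ga. simpl. apply Req_le. field. lra.
  - rewrite rsum_zrange_S. unfold ga at 1 3.
    replace (Z.abs_nat (- Z.of_nat (S N))) with (S N) by lia.
    replace (Z.abs_nat (Z.of_nat (S N))) with (S N) by lia.
    assert (E : 2 * s ^ S (S N) / (1 - s) = 2 * s ^ S N / (1 - s) - 2 * s ^ S N).
    { simpl. field. lra. }
    rewrite E. lra. Qed.

Lemma geo_total' s N : 0 < s < 1 -> rsum (map (ga s) (zrange N)) <= (1 + s) / (1 - s).
Proof. intros Hs. eapply Rle_trans. apply geo_total; auto.
  assert (0 <= 2 * s ^ S N / (1 - s)). { apply Rmult_le_pos. apply Rmult_le_pos. lra.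
  apply pow_le; lra. apply Rlt_le, Rinv_0_lt_compat; lra. } lra. Qed.

Definition ccv (s : nat -> C) (l : C) :=
  is_lim_seq (fun n => fst (s n)) (fst l) /\ is_lim_seq (fun n => snd (s n)) (snd l).

Lemma ccv_clim s l : ccv s l -> clim s = l.
Proof. intros [H1 H2]. unfold clim. apply is_lim_seq_unique in H1. apply is_lim_seq_unique in H2.
  unfold Re, Im. rewrite H1, H2. destruct l; reflexivity. Qed.

Lemma ccv_unique s l l' : ccv s l -> ccv s l' -> l = l'.
Proof. intros H H'. rewrite <- (ccv_clim _ _ H), <- (ccv_clim _ _ H'). auto. Qed.

Lemma ccv_ext s t l : (forall n, s n = t n) -> ccv t l -> ccv s l.
Proof. intros E [H1 H2]. split; eapply is_lim_seq_ext; try eassumption; intros n; rewrite E; auto. Qed.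

Lemma ccv_const c : ccv (fun _ => c) c.
Proof. split; apply is_lim_seq_const. Qed.

Lemma ccv_plus s t l m : ccv s l -> ccv t m -> ccv (fun n => s n + t n)%C (l + m)%C.
Proof. intros [H1 H2] [H3 H4]. split; simpl.
  - apply (is_lim_seq_plus' _ _ _ _ H1 H3).
  - apply (is_lim_seq_plus' _ _ _ _ H2 H4). Qed.

Lemma ccv_mult s t l m : ccv s l -> ccv t m -> ccv (fun n => s n * t n)%C (l * m)%C.
Proof. intros [H1 H2] [H3 H4]. split; simpl.
  - apply is_lim_seq_minus'; apply is_lim_seq_mult'; auto.
  - apply is_lim_seq_plus'; apply is_lim_seq_mult'; auto. Qed.

Lemma ccv_opp s l : ccv s l -> ccv (fun n => - s n)%C (- l)%C.
Proof. intros [H1 H2]. split; simpl.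
  - apply (is_lim_seq_opp _ (Finite (fst l))) in H1. simpl in H1. exact H1.
  - apply (is_lim_seq_opp _ (Finite (snd l))) in H2. simpl in H2. exact H2. Qed.

Lemma ccv_scal c s l : ccv s l -> ccv (fun n => c * s n)%C (c * l)%C.
Proof. intros H. apply ccv_mult; auto. apply ccv_const. Qed.

Lemma lim_le_0 (u e : nat -> R) : (forall n, Rabs (u n) <= e n) -> is_lim_seq e 0 -> is_lim_seq u 0.
Proof. intros H He. apply is_lim_seq_le_le with (u := fun n => - e n) (w := e).
  - intros n. specialize (H n). apply Rabs_le_between in H. lra.
  - replace (Finite 0) with (Rbar_opp 0) by (simpl; f_equal; ring). apply -> is_lim_seq_opp. auto.
  - auto. Qed.

Lemma im_le_Cmod c : Rabs (Im c) <= Cmod c.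
Proof. destruct c as [a b]. unfold Cmod, Im. simpl. rewrite <- sqrt_Rsqr_abs.
  apply sqrt_le_1_alt. unfold Rsqr. nra. Qed.

Lemma ccv_small s t l (e : nat -> R) :
  (forall n, Cmod (s n - t n)%C <= e n) -> is_lim_seq e 0 -> ccv t l -> ccv s l.
Proof. intros H He [H1 H2].
  assert (A1 : is_lim_seq (fun n => fst (s n - t n)%C) 0).
  { apply lim_le_0 with e; auto. intros n. eapply Rle_trans; [apply re_le_Cmod|]. auto. }
  assert (A2 : is_lim_seq (fun n => snd (s n - t n)%C) 0).
  { apply lim_le_0 with e; auto. intros n. eapply Rle_trans; [apply im_le_Cmod|]. auto. }
  split.
  - apply is_lim_seq_ext with (fun n => fst (s n - t n)%C + fst (t n)).
    intros n; simpl; ring. replace (fst l) with (0 + fst l) by ring. apply is_lim_seq_plus'; auto.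
  - apply is_lim_seq_ext with (fun n => snd (s n - t n)%C + snd (t n)).
    intros n; simpl; ring. replace (snd l) with (0 + snd l) by ring. apply is_lim_seq_plus'; auto. Qed.

Lemma cauchy_R (u e : nat -> R) : (forall n m, (n <= m)%nat -> Rabs (u m - u n) <= e n) ->
  is_lim_seq e 0 -> ex_finite_lim_seq u.
Proof. intros H He. apply ex_lim_seq_cauchy_corr. intros eps.
  apply is_lim_seq_spec in He. destruct (He eps) as [N HN]. exists N. intros n m Hn Hm.
  assert (Hn' := HN n Hn). assert (Hm' := HN m Hm). rewrite Rminus_0_r in Hn', Hm'.
  destruct (Nat.le_ge_cases n m) as [L|L].
  - specialize (H n m L). rewrite Rabs_minus_sym. eapply Rle_lt_trans. apply H.
    eapply Rle_lt_trans. apply Rle_abs. auto.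
  - specialize (H m n L). eapply Rle_lt_trans. apply H.
    eapply Rle_lt_trans. apply Rle_abs. auto. Qed.

Lemma ccv_cauchy (s : nat -> C) (e : nat -> R) :
  (forall n m, (n <= m)%nat -> Cmod (s m - s n)%C <= e n) -> is_lim_seq e 0 -> exists l, ccv s l.
Proof. intros H He.
  assert (E1 : ex_finite_lim_seq (fun n => fst (s n))).
  { apply cauchy_R with e; auto. intros n m L. eapply Rle_trans; [|apply (H n m L)].
    replace (fst (s m) - fst (s n)) with (Re (s m - s n)%C) by (simpl; ring). apply re_le_Cmod. }
  assert (E2 : ex_finite_lim_seq (fun n => snd (s n))).
  { apply cauchy_R with e; auto. intros n m L. eapply Rle_trans; [|apply (H n m L)].
    replace (snd (s m) - snd (s n)) with (Im (s m - s n)%C) by (simpl; ring). apply im_le_Cmod. }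
  destruct E1 as [l1 H1]. destruct E2 as [l2 H2]. exists (l1, l2). split; auto. Qed.

Lemma geom_lim K s : 0 < s < 1 -> is_lim_seq (fun n => K * s ^ n) 0.
Proof. intros Hs. replace (Finite 0) with (Rbar_mult K 0) by (simpl; f_equal; ring).
  apply is_lim_seq_scal_l. apply is_lim_seq_geom. rewrite Rabs_pos_eq; lra. Qed.
Definition dom (g : Z -> C) (K s : R) :=
  0 < s < 1 /\ 0 <= K /\ forall m, Cmod (g m) <= K * ga s m * ga s m.

Definition zS (g : Z -> C) (N : nat) : C := csum (map g (zrange N)).

Lemma ga_nat s n : ga s (Z.of_nat n) = s ^ n.
Proof. unfold ga. f_equal. lia. Qed.
Lemma ga_negnat s n : ga s (- Z.of_nat n) = s ^ n.
Proof. unfold ga. f_equal. lia. Qed.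

Lemma pow_le1 s n : 0 < s < 1 -> 0 <= s ^ n <= 1.
Proof. intros Hs. induction n; simpl; nra. Qed.

Lemma pow_sq_le s n : 0 < s < 1 -> s ^ n * s ^ n <= s ^ n.
Proof. intros Hs. pose proof (pow_le1 s n Hs). nra. Qed.

Lemma zS_cauchy g K s n d : dom g K s ->
  Cmod (zS g (n + d) - zS g n)%C <= 2 * K * s ^ S n / (1 - s) - 2 * K * s ^ S (n + d) / (1 - s).
Proof. intros (Hs & HK & Hg). induction d.
  - rewrite Nat.add_0_r. replace (zS g n - zS g n)%C with (RtoC 0) by ring. rewrite Cmod_0. lra.
  - replace (n + S d)%nat with (S (n + d)) by lia. unfold zS in *. rewrite csum_zrange_S.
    set (N := (n + d)%nat) in *.
    replace (g (- Z.of_nat (S N))%Z + csum (map g (zrange N)) + g (Z.of_nat (S N)) - csum (map g (zrange n)))%C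
      with ((csum (map g (zrange N)) - csum (map g (zrange n))) + (g (- Z.of_nat (S N))%Z + g (Z.of_nat (S N))))%C by ring.
    eapply Rle_trans. apply Cmod_triangle. eapply Rle_trans. apply Rplus_le_compat_l. apply Cmod_triangle.
    pose proof (Hg (- Z.of_nat (S N))%Z) as H1. pose proof (Hg (Z.of_nat (S N))) as H2.
    rewrite ga_negnat in H1. rewrite ga_nat in H2.
    pose proof (pow_sq_le s (S N) Hs).
    assert (E : 2 * K * s ^ S (S N) / (1 - s) = 2 * K * s ^ S N / (1 - s) - 2 * K * s ^ S N).
    { simpl. field. lra. }
    rewrite E. nra. Qed.

Lemma zS_ccv g K s : dom g K s -> exists l, ccv (zS g) l.
Proof. intros Hd. apply ccv_cauchy with (fun n => (2 * K * s / (1 - s)) * s ^ n).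
  - intros n m L. replace m with (n + (m - n))%nat by lia.
    eapply Rle_trans. apply zS_cauchy with (K := K) (s := s); auto.
    destruct Hd as (Hs & HK & _).
    assert (0 <= 2 * K * s ^ S (n + (m - n)) / (1 - s)).
    { apply Rmult_le_pos. apply Rmult_le_pos. lra. apply pow_le; lra. apply Rlt_le, Rinv_0_lt_compat; lra. }
    replace (2 * K * s / (1 - s) * s ^ n) with (2 * K * s ^ S n / (1 - s)) by (simpl; field; lra). lra.
  - apply geom_lim. apply Hd. Qed.

Lemma zsum_ccv g K s : dom g K s -> ccv (zS g) (zsum g).
Proof. intros Hd. destruct (zS_ccv g K s Hd) as [l Hl].
  unfold zsum. fold (zS g). rewrite (ccv_clim _ _ Hl). auto. Qed.

Lemma zsum_ext f g : (forall n, f n = g n) -> zsum f = zsum g.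
Proof. intros H. replace f with g; auto. apply functional_extensionality; auto. Qed.

Lemma dom_ext f g K s : (forall n, f n = g n) -> dom g K s -> dom f K s.
Proof. intros H (a & b & c). split; auto. split; auto. intros m; rewrite H; auto. Qed.

Lemma dom_scal g K s c : dom g K s -> dom (fun n => c * g n)%C (Cmod c * K) s.
Proof. intros (a & b & h). split; auto. split. apply Rmult_le_pos; auto. apply Cmod_ge_0.
  intros m. rewrite Cmod_mult. rewrite !Rmult_assoc. apply Rmult_le_compat_l. apply Cmod_ge_0.
  rewrite <- !Rmult_assoc. auto. Qed.

Lemma zsum_scal g K s c : dom g K s -> zsum (fun n => c * g n)%C = (c * zsum g)%C.
Proof. intros Hd. apply ccv_clim. apply ccv_ext with (fun N => c * zS g N)%C.
  intros N. unfold zS. rewrite csum_map_scal. auto. apply ccv_scal. eapply zsum_ccv; eauto. Qed.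

Lemma zsum_opp g K s : dom g K s -> zsum (fun n => - g n)%C = (- zsum g)%C.
Proof. intros Hd. replace (- zsum g)%C with (RtoC (-1) * zsum g)%C by (unfold RtoC, Cmult, Copp; simpl; f_equal; ring).
  rewrite <- (zsum_scal g K s); auto. apply zsum_ext. intros n. unfold RtoC, Cmult, Copp; simpl.
  destruct (g n); simpl; f_equal; ring. Qed.

Lemma dom_tail g K s n : dom g K s -> Cmod (g (Z.of_nat n)) <= K * s ^ n /\ Cmod (g (- Z.of_nat n)%Z) <= K * s ^ n.
Proof. intros (Hs & HK & Hg). pose proof (pow_sq_le s n Hs). split.
  - eapply Rle_trans. apply Hg. rewrite ga_nat. nra.
  - eapply Rle_trans. apply Hg. rewrite ga_negnat. nra. Qed.

Lemma zS_refl g N : zS (fun k => g (-1 - k)%Z) N = (zS g N - g (Z.of_nat N) + g (- Z.of_nat N - 1)%Z)%C.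
Proof. unfold zS. induction N.
  - rewrite !csum_zrange_0. simpl. ring.
  - rewrite !csum_zrange_S, IHN.
    replace (-1 - - Z.of_nat (S N))%Z with (Z.of_nat N) by lia.
    replace (-1 - Z.of_nat (S N))%Z with (- Z.of_nat (S N) - 1)%Z by lia.
    replace (- Z.of_nat N - 1)%Z with (- Z.of_nat (S N))%Z by lia. ring. Qed.

Lemma zsum_refl g K s : dom g K s -> zsum (fun k => g (-1 - k)%Z) = zsum g.
Proof. intros Hd. apply ccv_clim. apply ccv_ext with (zS (fun k => g (-1 - k)%Z)); [intros; reflexivity|].
  apply ccv_small with (zS g) (fun n => 2 * K * s ^ n).
  - intros n. rewrite zS_refl.
    replace (zS g n - g (Z.of_nat n) + g (- Z.of_nat n - 1)%Z - zS g n)%C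
      with (- g (Z.of_nat n) + g (- Z.of_nat (S n))%Z)%C by (replace (- Z.of_nat n - 1)%Z with (- Z.of_nat (S n))%Z by lia; ring).
    eapply Rle_trans. apply Cmod_triangle. rewrite Cmod_opp.
    destruct (dom_tail g K s n Hd) as [H1 _]. destruct (dom_tail g K s (S n) Hd) as [_ H2].
    destruct Hd as (Hs & HK & _). replace (s ^ S n) with (s * s ^ n) in H2 by reflexivity. assert (s * s ^ n <= s ^ n).
    { pose proof (pow_le1 s n Hs). nra. } nra.
  - replace (fun n => 2 * K * s ^ n) with (fun n => (2 * K) * s ^ n) by auto. apply geom_lim, Hd.
  - eapply zsum_ccv; eauto. Qed.
Definition zz_dec (u v : Z * Z) : {u = v} + {u <> v}.
Proof. decide equality; apply Z.eq_dec. Defined.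

Definition dom2 (G : Z -> Z -> C) (K s : R) :=
  0 < s < 1 /\ 0 <= K /\ forall a b, Cmod (G a b) <= K * (ga s a * ga s a) * (ga s b * ga s b).

Definition bsum (G : Z -> Z -> C) N := csum (map (fun b => G (fst b) (snd b)) (box N)).

Lemma pow_decr s n m : 0 < s < 1 -> (n <= m)%nat -> s ^ m <= s ^ n.
Proof. intros Hs L. replace m with (n + (m - n))%nat by lia. rewrite pow_add.
  pose proof (pow_le1 s n Hs). pose proof (pow_le1 s (m - n) Hs). nra. Qed.

Lemma ga_tail s N b1 b2 : 0 < s < 1 -> ~ In (b1, b2) (box N) ->
  ga s b1 * ga s b1 * (ga s b2 * ga s b2) <= s ^ S N * (ga s b1 * ga s b2).
Proof. intros Hs Hn. rewrite box_In in Hn.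
  pose proof (pow_le1 s (Z.abs_nat b1) Hs). pose proof (pow_le1 s (Z.abs_nat b2) Hs).
  pose proof (pow_le1 s (S N) Hs). unfold ga in *.
  assert (HH : (S N <= Z.abs_nat b1)%nat \/ (S N <= Z.abs_nat b2)%nat) by lia.
  destruct HH as [L|L]; apply (pow_decr s) in L; auto.
  - set (u := s ^ Z.abs_nat b1) in *. set (v := s ^ Z.abs_nat b2) in *.
    set (w := s ^ S N) in *. assert (u * u <= w * u) by nra. assert (v * v <= v) by nra.
    assert (0 <= u * u) by nra. nra.
  - set (u := s ^ Z.abs_nat b1) in *. set (v := s ^ Z.abs_nat b2) in *.
    set (w := s ^ S N) in *. assert (v * v <= w * v) by nra. assert (u * u <= u) by nra.
    assert (0 <= v * v) by nra. nra. Qed.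

Lemma box_sub N M : (N <= M)%nat -> forall b, In b (box N) -> In b (box M).
Proof. intros L [a b]. rewrite !box_In. lia. Qed.

Lemma split_bound G K s (phi1 phi2 : Z * Z -> Z * Z) :
  dom2 G K s ->
  (forall a a', phi1 a = phi1 a' -> a = a') -> (forall a a', phi2 a = phi2 a' -> a = a') ->
  (forall a a', phi1 a <> phi2 a') ->
  (forall N a, In a (box N) -> In (phi1 a) (box (2 * N + 1)) /\ In (phi2 a) (box (2 * N + 1))) ->
  (forall N b, In b (box N) -> exists a, In a (box N) /\ (phi1 a = b \/ phi2 a = b)) ->
  forall N, Cmod (bsum G N - csum (map (fun a => G (fst (phi1 a)) (snd (phi1 a))) (box N))
                  - csum (map (fun a => G (fst (phi2 a)) (snd (phi2 a))) (box N)))%C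
            <= 2 * K * s ^ S N * ((1 + s) / (1 - s) * ((1 + s) / (1 - s))).
Proof. intros (Hs & HK & HG) I1 I2 D12 Hin Hcov N.
  set (M := (2 * N + 1)%nat).
  assert (E0 : bsum G N = csum (map (fun b => if in_dec zz_dec b (map (fun a => a) (box N))
                 then G (fst b) (snd b) else 0%C) (box M))).
  { unfold bsum. apply (reindex zz_dec (fun a => a) (fun b => G (fst b) (snd b))).
    apply box_NoDup. apply box_NoDup. auto. intros a; apply box_sub; lia. }
  assert (E1 : csum (map (fun a => G (fst (phi1 a)) (snd (phi1 a))) (box N)) =
      csum (map (fun b => if in_dec zz_dec b (map phi1 (box N))
                 then G (fst b) (snd b) else 0%C) (box M))).
  { apply (reindex zz_dec phi1 (fun b => G (fst b) (snd b))).
    apply box_NoDup. apply box_NoDup. auto. intros a Ha; apply Hin; auto. }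
  assert (E2 : csum (map (fun a => G (fst (phi2 a)) (snd (phi2 a))) (box N)) =
      csum (map (fun b => if in_dec zz_dec b (map phi2 (box N))
                 then G (fst b) (snd b) else 0%C) (box M))).
  { apply (reindex zz_dec phi2 (fun b => G (fst b) (snd b))).
    apply box_NoDup. apply box_NoDup. auto. intros a Ha; apply Hin; auto. }
  rewrite E0, E1, E2, <- !csum_map_minus. rewrite map_id.
  eapply Rle_trans. apply Cmod_csum_le with
    (h := fun b => 2 * K * s ^ S N * (ga s (fst b) * ga s (snd b))).
  - intros [b1 b2] _. simpl fst; simpl snd.
    destruct (in_dec zz_dec (b1, b2) (box N)) as [Hb|Hb].
    + destruct (Hcov N _ Hb) as [a [Ha [Ea|Ea]]].
      * destruct (in_dec zz_dec (b1, b2) (map phi1 (box N))) as [_|C1].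
        2: { exfalso; apply C1; rewrite <- Ea; apply in_map; auto. }
        destruct (in_dec zz_dec (b1, b2) (map phi2 (box N))) as [C2|_].
        { exfalso. apply in_map_iff in C2. destruct C2 as [a' [Ea' _]]. apply (D12 a a'). congruence. }
        replace (G b1 b2 - G b1 b2 - 0)%C with (RtoC 0) by ring. rewrite Cmod_0.
        pose proof (ga_pos s b1 (proj1 Hs)). pose proof (ga_pos s b2 (proj1 Hs)).
        pose proof (pow_le1 s (S N) Hs). apply Rmult_le_pos; [|nra]. nra.
      * destruct (in_dec zz_dec (b1, b2) (map phi2 (box N))) as [_|C1].
        2: { exfalso; apply C1; rewrite <- Ea; apply in_map; auto. }
        destruct (in_dec zz_dec (b1, b2) (map phi1 (box N))) as [C2|_].
        { exfalso. apply in_map_iff in C2. destruct C2 as [a' [Ea' _]]. apply (D12 a' a). congruence. }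
        replace (G b1 b2 - 0 - G b1 b2)%C with (RtoC 0) by ring. rewrite Cmod_0.
        pose proof (ga_pos s b1 (proj1 Hs)). pose proof (ga_pos s b2 (proj1 Hs)).
        pose proof (pow_le1 s (S N) Hs). apply Rmult_le_pos; [|nra]. nra.
    + assert (T : Cmod (G b1 b2) <= K * s ^ S N * (ga s b1 * ga s b2)).
      { eapply Rle_trans. apply HG. pose proof (ga_tail s N b1 b2 Hs Hb). rewrite Rmult_assoc.
        rewrite (Rmult_assoc K). apply Rmult_le_compat_l; auto. }
      assert (T2 : forall (c1 c2 : bool), Cmod (0 - (if c1 then G b1 b2 else 0) - (if c2 then G b1 b2 else 0))%C
                 <= 2 * Cmod (G b1 b2)).
      { intros c1 c2. pose proof (Cmod_ge_0 (G b1 b2)).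
        destruct c1, c2.
        - replace (0 - G b1 b2 - G b1 b2)%C with (RtoC (-2) * G b1 b2)%C.
          rewrite Cmod_mult, Cmod_R, Rabs_left; lra.
          unfold RtoC, Cmult, Cminus, Copp, Cplus; destruct (G b1 b2); simpl; f_equal; ring.
        - replace (0 - G b1 b2 - 0)%C with (- G b1 b2)%C by ring. rewrite Cmod_opp. lra.
        - replace (0 - 0 - G b1 b2)%C with (- G b1 b2)%C by ring. rewrite Cmod_opp. lra.
        - replace (0 - 0 - 0)%C with (RtoC 0) by ring. rewrite Cmod_0. lra. }
      destruct (in_dec zz_dec (b1, b2) (map phi1 (box N)));
      destruct (in_dec zz_dec (b1, b2) (map phi2 (box N)));
      [pose proof (T2 true true) as T3|pose proof (T2 true false) as T3|
       pose proof (T2 false true) as T3|pose proof (T2 false false) as T3]; simpl in T3;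
      eapply Rle_trans; try apply T3; nra.
  - rewrite (rsum_map_scal (2 * K * s ^ S N) (fun b => ga s (fst b) * ga s (snd b))).
    unfold box. rewrite (rsum_prod (ga s) (ga s)).
    pose proof (geo_total' s M Hs).
    assert (0 <= rsum (map (ga s) (zrange M))).
    { clear -Hs. induction (zrange M); simpl. lra. pose proof (ga_pos s a (proj1 Hs)). lra. }
    assert (0 <= 2 * K * s ^ S N). { pose proof (pow_le1 s (S N) Hs). nra. }
    apply Rmult_le_compat_l; auto. apply Rmult_le_compat; auto. Qed.
Definition domex f := exists K s, dom f K s.

Lemma zsum_ccv' f : domex f -> ccv (zS f) (zsum f).
Proof. intros (K & s & H). eapply zsum_ccv; eauto. Qed.

Lemma bsum_prod (g1 g2 : Z -> C) N : bsum (fun a b => g1 a * g2 b)%C N = (zS g1 N * zS g2 N)%C.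
Proof. unfold bsum, box, zS. rewrite <- csum_prod. auto. Qed.

Lemma z2sum_bsum G : z2sum G = clim (bsum G).
Proof. unfold z2sum, bsum, box. f_equal. apply functional_extensionality. intros N.
  rewrite map_flat_map_prod. auto. Qed.

Lemma split_ccv G K s (phi1 phi2 : Z * Z -> Z * Z) f1 h1 f2 h2 :
  dom2 G K s ->
  (forall a a', phi1 a = phi1 a' -> a = a') -> (forall a a', phi2 a = phi2 a' -> a = a') ->
  (forall a a', phi1 a <> phi2 a') ->
  (forall N a, In a (box N) -> In (phi1 a) (box (2 * N + 1)) /\ In (phi2 a) (box (2 * N + 1))) ->
  (forall N b, In b (box N) -> exists a, In a (box N) /\ (phi1 a = b \/ phi2 a = b)) ->
  (forall k l, G (fst (phi1 (k, l))) (snd (phi1 (k, l))) = f1 k * h1 l)%C ->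
  (forall k l, G (fst (phi2 (k, l))) (snd (phi2 (k, l))) = f2 k * h2 l)%C ->
  domex f1 -> domex h1 -> domex f2 -> domex h2 ->
  ccv (bsum G) (zsum f1 * zsum h1 + zsum f2 * zsum h2)%C.
Proof. intros HG I1 I2 D12 Hin Hcov F1 F2 d1 d2 d3 d4.
  apply ccv_small with (fun N => zS f1 N * zS h1 N + zS f2 N * zS h2 N)%C
     (fun N => (2 * K * s * ((1 + s) / (1 - s) * ((1 + s) / (1 - s)))) * s ^ N).
  - intros N. eapply Rle_trans; [|eapply Rle_trans; [apply (split_bound G K s phi1 phi2 HG I1 I2 D12 Hin Hcov N)|]].
    + right. f_equal. rewrite <- !bsum_prod. unfold bsum.
      rewrite (csum_map_ext_in (fun a => G (fst (phi1 a)) (snd (phi1 a))) (fun b => f1 (fst b) * h1 (snd b))%C).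
      rewrite (csum_map_ext_in (fun a => G (fst (phi2 a)) (snd (phi2 a))) (fun b => f2 (fst b) * h2 (snd b))%C).
      ring. intros [k l] _; apply F2. intros [k l] _; apply F1.
    + right. simpl. ring.
  - apply geom_lim. apply HG.
  - apply ccv_plus; apply ccv_mult; apply zsum_ccv'; auto. Qed.

Lemma split_prod g1 g2 (phi1 phi2 : Z * Z -> Z * Z) f1 h1 f2 h2 :
  (exists K s, dom2 (fun a b => g1 a * g2 b)%C K s) ->
  (forall a a', phi1 a = phi1 a' -> a = a') -> (forall a a', phi2 a = phi2 a' -> a = a') ->
  (forall a a', phi1 a <> phi2 a') ->
  (forall N a, In a (box N) -> In (phi1 a) (box (2 * N + 1)) /\ In (phi2 a) (box (2 * N + 1))) ->
  (forall N b, In b (box N) -> exists a, In a (box N) /\ (phi1 a = b \/ phi2 a = b)) ->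
  (forall k l, g1 (fst (phi1 (k, l))) * g2 (snd (phi1 (k, l))) = f1 k * h1 l)%C ->
  (forall k l, g1 (fst (phi2 (k, l))) * g2 (snd (phi2 (k, l))) = f2 k * h2 l)%C ->
  domex g1 -> domex g2 ->
  domex f1 -> domex h1 -> domex f2 -> domex h2 ->
  (zsum g1 * zsum g2 = zsum f1 * zsum h1 + zsum f2 * zsum h2)%C.
Proof. intros [K [s HG]]. intros. apply (ccv_unique (bsum (fun a b => g1 a * g2 b)%C)).
  - apply ccv_ext with (fun N => zS g1 N * zS g2 N)%C. apply bsum_prod.
    apply ccv_mult; apply zsum_ccv'; auto.
  - apply (split_ccv _ K s phi1 phi2 f1 h1 f2 h2); auto. Qed.

Lemma split_z2 G (phi1 phi2 : Z * Z -> Z * Z) f1 h1 f2 h2 :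
  (exists K s, dom2 G K s) ->
  (forall a a', phi1 a = phi1 a' -> a = a') -> (forall a a', phi2 a = phi2 a' -> a = a') ->
  (forall a a', phi1 a <> phi2 a') ->
  (forall N a, In a (box N) -> In (phi1 a) (box (2 * N + 1)) /\ In (phi2 a) (box (2 * N + 1))) ->
  (forall N b, In b (box N) -> exists a, In a (box N) /\ (phi1 a = b \/ phi2 a = b)) ->
  (forall k l, G (fst (phi1 (k, l))) (snd (phi1 (k, l))) = f1 k * h1 l)%C ->
  (forall k l, G (fst (phi2 (k, l))) (snd (phi2 (k, l))) = f2 k * h2 l)%C ->
  domex f1 -> domex h1 -> domex f2 -> domex h2 ->
  z2sum G = (zsum f1 * zsum h1 + zsum f2 * zsum h2)%C.
Proof. intros [K [s HG]]. intros. rewrite z2sum_bsum. apply ccv_clim. apply (split_ccv _ K s phi1 phi2 f1 h1 f2 h2); auto. Qed.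

Definition phiA (a : Z * Z) : Z * Z := let '(k, l) := a in ((k + l)%Z, (k - l)%Z).
Definition phiB (a : Z * Z) : Z * Z := let '(k, l) := a in ((k + l + 1)%Z, (k - l)%Z).
Definition psiA (a : Z * Z) : Z * Z := let '(k, l) := a in ((k - l)%Z, (k + l)%Z).
Definition psiB (a : Z * Z) : Z * Z := let '(k, l) := a in ((k - l)%Z, (k + l + 1)%Z).
Definition phiC (a : Z * Z) : Z * Z := let '(k, l) := a in ((k + l)%Z, (k - l - 1)%Z).

Ltac maps_tac :=
  repeat match goal with
  | |- forall _, _ => intros
  | a : (Z * Z)%type |- _ => destruct a
  | H : (_, _) = (_, _) |- _ => inversion H; clear H
  end; simpl in *; try (f_equal; lia).

Lemma pairs_ok1 (p1 p2 : Z * Z -> Z * Z) :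
  (p1 = phiA /\ p2 = phiB) \/ (p1 = psiA /\ p2 = psiB) \/ (p1 = phiA /\ p2 = phiC) ->
  (forall a a', p1 a = p1 a' -> a = a') /\ (forall a a', p2 a = p2 a' -> a = a') /\
  (forall a a', p1 a <> p2 a') /\
  (forall N a, In a (box N) -> In (p1 a) (box (2 * N + 1)) /\ In (p2 a) (box (2 * N + 1))) /\
  (forall N b, In b (box N) -> exists a, In a (box N) /\ (p1 a = b \/ p2 a = b)).
Proof. intros [[-> ->]|[[-> ->]|[-> ->]]]; repeat split;
  try (intros [k l] [k' l'] E; simpl in E; inversion E; f_equal; lia);
  try (intros [k l] [k' l'] E; simpl in E; inversion E; lia);
  try (match goal with a : (Z * Z)%type |- _ => destruct a as [k l] end; simpl; rewrite box_In in *; lia);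
  intros N0 [m1 m2] Hb; rewrite box_In in Hb;
  destruct (Z.Even_or_Odd (m1 + m2)) as [[j Hj]|[j Hj]].
  - exists (j, (j - m2)%Z). rewrite box_In. split. lia. left. simpl. f_equal; lia.
  - exists (j, (j - m2)%Z). rewrite box_In. split. lia. right. simpl. f_equal; lia.
  - exists (j, (j - m1)%Z). rewrite box_In. split. lia. left. simpl. f_equal; lia.
  - exists (j, (j - m1)%Z). rewrite box_In. split. lia. right. simpl. f_equal; lia.
  - exists (j, (j - m2)%Z). rewrite box_In. split. lia. left. simpl. f_equal; lia.
  - exists ((j + 1)%Z, (m1 - j - 1)%Z). rewrite box_In. split. lia. right. simpl. f_equal; lia.
Qed.
Lemma cexp_add a b : cexp (a + b)%C = (cexp a * cexp b)%C.
Proof. destruct a as [a1 a2], b as [b1 b2]. unfold cexp, Re, Im. simpl.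
  rewrite exp_plus, cos_plus, sin_plus. unfold Cmult; simpl. f_equal; ring. Qed.

Lemma Cmod_cexp z : Cmod (cexp z) = exp (Re z).
Proof. unfold cexp, Cmod. cbn [fst snd].
  replace ((exp (Re z) * cos (Im z)) ^ 2 + (exp (Re z) * sin (Im z)) ^ 2) with (exp (Re z) ^ 2).
  apply sqrt_pow2. apply Rlt_le, exp_pos.
  pose proof (sin2_cos2 (Im z)). unfold Rsqr in H. nra. Qed.

Definition sgR (j : Z) : R := if Z.even j then 1 else -1.
Definition sg (j : Z) : C := RtoC (sgR j).

Lemma sgR_add a b : sgR (a + b) = sgR a * sgR b.
Proof. unfold sgR. rewrite Z.even_add. destruct (Z.even a), (Z.even b); simpl; ring. Qed.
Lemma sgR_opp a : sgR (- a) = sgR a.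
Proof. unfold sgR. rewrite Z.even_opp. auto. Qed.
Lemma sgR_sub a b : sgR (a - b) = sgR a * sgR b.
Proof. unfold Z.sub. rewrite sgR_add, sgR_opp. auto. Qed.
Lemma sgR_succ j : sgR (Z.succ j) = - sgR j.
Proof. unfold sgR. rewrite Z.even_succ, <- Z.negb_even. destruct (Z.even j); simpl; ring. Qed.
Lemma sgR_pred j : sgR (Z.pred j) = - sgR j.
Proof. rewrite <- (Z.succ_pred j) at 2. rewrite sgR_succ. ring. Qed.

Lemma cos_sin_PIZ j : cos (PI * IZR j) = sgR j /\ sin (PI * IZR j) = 0.
Proof. induction j using Z.peano_ind.
  - rewrite Rmult_0_r, cos_0, sin_0. unfold sgR; simpl. auto.
  - rewrite succ_IZR, sgR_succ. replace (PI * (IZR j + 1)) with (PI * IZR j + PI) by ring.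
    rewrite neg_cos, neg_sin. destruct IHj as [-> ->]. split; ring.
  - rewrite <- Z.sub_1_r, minus_IZR, Z.sub_1_r, sgR_pred. destruct IHj as [H1 H2].
    pose proof (neg_cos (PI * (IZR j - 1))) as A. pose proof (neg_sin (PI * (IZR j - 1))) as B.
    replace (PI * (IZR j - 1) + PI) with (PI * IZR j) in A, B by ring. split; lra. Qed.

Lemma powerRZ_m1 j : powerRZ (-1) j = sgR j.
Proof. induction j using Z.peano_ind.
  - simpl. unfold sgR. simpl. auto.
  - rewrite <- Z.add_1_r, powerRZ_add, IHj by lra. rewrite Z.add_1_r, sgR_succ. simpl. ring.
  - replace (Z.pred j) with (j + -1)%Z by lia. rewrite powerRZ_add, IHj by lra.
    replace (j + -1)%Z with (Z.pred j) by lia. rewrite sgR_pred. simpl. field. Qed.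

Lemma cexp_shift z j : cexp (z + Ci * RtoC (PI * IZR j))%C = (sg j * cexp z)%C.
Proof. destruct z as [a b]. unfold cexp, sg, Re, Im. cbn [fst snd Cplus Cmult Ci RtoC].
  replace (a + (0 * (PI * IZR j) - 1 * 0)) with a by ring.
  replace (b + (0 * 0 + 1 * (PI * IZR j))) with (b + PI * IZR j) by ring.
  rewrite cos_plus, sin_plus. destruct (cos_sin_PIZ j) as [-> ->].
  unfold Cmult, RtoC; cbn [fst snd]. f_equal; ring. Qed.

Lemma Cmod_sg j : Cmod (sg j) = 1.
Proof. unfold sg, sgR. rewrite Cmod_R. destruct (Z.even j). apply Rabs_R1.
  rewrite Rabs_left; lra. Qed.

Lemma sg_add a b : sg (a + b) = (sg a * sg b)%C.
Proof. unfold sg. rewrite sgR_add. rewrite RtoC_mult. auto. Qed.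
Lemma sg_sub a b : sg (a - b) = (sg a * sg b)%C.
Proof. unfold sg. rewrite sgR_sub. rewrite RtoC_mult. auto. Qed.
Lemma sg_1 : sg 1 = RtoC (-1).
Proof. reflexivity. Qed.
Lemma sg_sq a : (sg a * sg a)%C = 1%C.
Proof. unfold sg, sgR. destruct (Z.even a); unfold RtoC, Cmult; simpl; f_equal; ring. Qed.

Lemma exp_pow_nat a n : exp a ^ n = exp (INR n * a).
Proof. induction n. simpl. rewrite Rmult_0_l, exp_0. auto.
  rewrite S_INR. simpl pow. rewrite IHn, <- exp_plus. f_equal. ring. Qed.

Lemma sq_bound m h : 0 <= h <= 1 -> Rabs (IZR m) - 1 <= (IZR m + h) ^ 2.
Proof. intros Hh. destruct (Z_lt_le_dec m 0) as [L|L].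
  - destruct (Z.eq_dec m (-1)) as [E|E].
    + subst. rewrite Rabs_left by lra. nra.
    + assert (IZR m <= -2) by (apply IZR_le; lia). rewrite Rabs_left by lra. nra.
  - destruct (Z.eq_dec m 0) as [E|E].
    + subst. rewrite Rabs_R0. nra.
    + assert (1 <= IZR m) by (apply IZR_le; lia). rewrite Rabs_right by lra. nra. Qed.

Lemma exp_le' x y : x <= y -> exp x <= exp y.
Proof. intros [L|E]. left; apply exp_increasing; auto. right; subst; auto. Qed.

Lemma INR_abs m : INR (Z.abs_nat m) = Rabs (IZR m).
Proof. rewrite INR_IZR_INZ, Znat.Zabs2Nat.id_abs, abs_IZR. auto. Qed.

Lemma gauss_le T h m : 0 < T -> 0 <= h <= 1 ->
  exp (- (PI * T * (IZR m + h) ^ 2)) <=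
  exp (PI * T) * ga (exp (- (PI * T / 2))) m * ga (exp (- (PI * T / 2))) m.
Proof. intros HT Hh. unfold ga. rewrite exp_pow_nat, <- !exp_plus.
  apply exp_le'. rewrite INR_abs. pose proof (sq_bound m h Hh). pose proof PI_RGT_0.
  assert (0 < PI * T) by nra. nra. Qed.

Lemma ga_lt1 T : 0 < T -> 0 < exp (- (PI * T / 2)) < 1.
Proof. intros HT. split. apply exp_pos. rewrite <- exp_0. apply exp_increasing.
  pose proof PI_RGT_0. nra. Qed.
Definition E (t : C) (h : R) (k : Z) : C := cexp (PI * Ci * t * RtoC ((IZR k + h) ^ 2)).

Lemma Re_arg t r : Re (PI * Ci * t * RtoC r)%C = - (PI * Im t * r).
Proof. destruct t as [a b]. unfold Re, Im, RtoC, Cmult, Ci. cbn [fst snd]. ring. Qed.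

Lemma Cmod_E t h k : Cmod (E t h k) = exp (- (PI * Im t * (IZR k + h) ^ 2)).
Proof. unfold E. rewrite Cmod_cexp, Re_arg. auto. Qed.

Lemma dom_E t h : 0 < Im t -> 0 <= h <= 1 ->
  dom (E t h) (exp (PI * Im t)) (exp (- (PI * Im t / 2))).
Proof. intros Ht Hh. split. apply ga_lt1; auto. split. apply Rlt_le, exp_pos.
  intros m. rewrite Cmod_E. apply gauss_le; auto. Qed.

Lemma dom_sgE t h : 0 < Im t -> 0 <= h <= 1 ->
  dom (fun k => sg k * E t h k)%C (exp (PI * Im t)) (exp (- (PI * Im t / 2))).
Proof. intros Ht Hh. destruct (dom_E t h Ht Hh) as (a & b & c). split; auto. split; auto.
  intros m. rewrite Cmod_mult, Cmod_sg, Rmult_1_l. auto. Qed.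

Lemma domex_E t h : 0 < Im t -> 0 <= h <= 1 -> domex (E t h).
Proof. intros. eexists; eexists; apply dom_E; auto. Qed.
Lemma domex_sgE t h : 0 < Im t -> 0 <= h <= 1 -> domex (fun k => sg k * E t h k)%C.
Proof. intros. eexists; eexists; apply dom_sgE; auto. Qed.
Lemma domex_scal f c : domex f -> domex (fun k => c * f k)%C.
Proof. intros (K & s & H). eexists; eexists; apply dom_scal; eauto. Qed.
Lemma domex_opp f : domex f -> domex (fun k => - f k)%C.
Proof. intros H. apply domex_scal with (c := RtoC (-1)) in H.
  destruct H as (K & s & H). exists K, s. eapply dom_ext; [|apply H].
  intros n. unfold RtoC, Cmult, Copp; destruct (f n); simpl; f_equal; ring. Qed.
Lemma zsum_opp' f : domex f -> zsum (fun n => - f n)%C = (- zsum f)%C.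
Proof. intros (K & s & H). eapply zsum_opp; eauto. Qed.
Lemma zsum_refl' g : domex g -> zsum (fun k => g (-1 - k)%Z) = zsum g.
Proof. intros (K & s & H). eapply zsum_refl; eauto. Qed.

Lemma dom2_prod g1 g2 K1 K2 s : dom g1 K1 s -> dom g2 K2 s ->
  dom2 (fun a b => g1 a * g2 b)%C (K1 * K2) s.
Proof. intros (a & b & c) (a' & b' & c'). split; auto. split. apply Rmult_le_pos; auto.
  intros m1 m2. rewrite Cmod_mult. specialize (c m1). specialize (c' m2).
  eapply Rle_trans. apply Rmult_le_compat; try apply Cmod_ge_0; eauto. right; ring. Qed.

Lemma E_fact t h1 h2 h3 h4 n m k l :
  (IZR n + h1) ^ 2 + (IZR m + h2) ^ 2 = 2 * (IZR k + h3) ^ 2 + 2 * (IZR l + h4) ^ 2 ->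
  (E t h1 n * E t h2 m = E (2 * t) h3 k * E (2 * t) h4 l)%C.
Proof. intros H. unfold E. rewrite <- !cexp_add. f_equal.
  transitivity (PI * Ci * t * RtoC ((IZR n + h1) ^ 2 + (IZR m + h2) ^ 2))%C.
  rewrite RtoC_plus. ring. rewrite H. rewrite RtoC_plus, !RtoC_mult. ring. Qed.

Lemma cexp_nz z : cexp z <> 0%C.
Proof. intros H. pose proof (Cmod_cexp z). rewrite H, Cmod_0 in H0. pose proof (exp_pos (Re z)). lra. Qed.
Lemma E_nz t h k : E t h k <> 0%C.
Proof. apply cexp_nz. Qed.

Lemma E_fact' t h1 h2 h3 h4 n m k l :
  (IZR n + h1) ^ 2 + (IZR m + h2) ^ 2 = 2 * (IZR k + h3) ^ 2 + 2 * (IZR l + h4) ^ 2 ->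
  E t h2 m = (E (2 * t) h3 k * E (2 * t) h4 l / E t h1 n)%C.
Proof. intros H. rewrite <- (E_fact t h1 h2 h3 h4 n m k l H). field. apply E_nz. Qed.

Ltac realeq := rewrite ?plus_IZR, ?minus_IZR, ?opp_IZR; field.
Ltac sgtac k l := rewrite ?sg_add, ?sg_sub; unfold sg, sgR;
  destruct (Z.even k), (Z.even l); simpl Z.even; cbv iota; field; apply E_nz.

Section OneVar.
Variable x : C.
Hypothesis hx : 0 < Im x.

Lemma Im2 : 0 < Im (2 * x)%C.
Proof. destruct x as [a b]. unfold Im in *. simpl in *. lra. Qed.

Ltac dE := repeat apply domex_opp; first [ apply domex_E | apply domex_sgE ];
  first [ apply hx | apply Im2 | split; lra ].

Definition a0 := zsum (E (2 * x) 0).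
Definition ah := zsum (E (2 * x) (/2)).
Definition aq := zsum (E (2 * x) (/4)).
Definition s0 := zsum (fun k => sg k * E (2 * x) 0 k)%C.
Definition sq := zsum (fun k => sg k * E (2 * x) (/4) k)%C.

Lemma I1 : (zsum (E x 0) * zsum (E x 0) = a0 * a0 + ah * ah)%C.
Proof. destruct (pairs_ok1 phiA phiB (or_introl (conj eq_refl eq_refl))) as (J1 & J2 & J3 & J4 & J5).
  apply (split_prod _ _ phiA phiB); auto.
  - do 2 eexists. apply dom2_prod; apply dom_E; auto; lra.
  - intros k l. simpl. apply E_fact. rewrite plus_IZR, minus_IZR. ring.
  - intros k l. simpl. apply E_fact. rewrite !plus_IZR, minus_IZR. field.
  all: dE.
Qed.

Lemma I2 : (zsum (fun k => sg k * E x 0 k) * zsum (fun k => sg k * E x 0 k) = a0 * a0 - ah * ah)%C.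
Proof. destruct (pairs_ok1 phiA phiB (or_introl (conj eq_refl eq_refl))) as (J1 & J2 & J3 & J4 & J5).
  unfold a0, ah. replace (zsum (E (2 * x) 0) * zsum (E (2 * x) 0) - zsum (E (2 * x) (/ 2)) * zsum (E (2 * x) (/ 2)))%C
    with (zsum (E (2 * x) 0) * zsum (E (2 * x) 0) + zsum (fun k => - E (2 * x) (/ 2) k)%C * zsum (E (2 * x) (/ 2)))%C
    by (rewrite zsum_opp' by dE; ring).
  apply (split_prod _ _ phiA phiB); auto.
  - do 2 eexists. apply dom2_prod; apply dom_sgE; auto; lra.
  - intros k l. cbn [phiA fst snd]. rewrite (E_fact' x 0 0 0 0 (k + l) (k - l) k l) by realeq. sgtac k l.
  - intros k l. cbn [phiB fst snd]. rewrite (E_fact' x 0 0 (/2) (/2) (k + l + 1) (k - l) k l) by realeq. sgtac k l.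
  all: dE.
Qed.

Lemma I3 : (zsum (E x 0) * zsum (fun k => sg k * E x 0 k) =
   s0 * s0 + zsum (fun k => sg k * E (2 * x) (/2) k) * zsum (fun k => sg k * E (2 * x) (/2) k))%C.
Proof. destruct (pairs_ok1 phiA phiB (or_introl (conj eq_refl eq_refl))) as (J1 & J2 & J3 & J4 & J5).
  apply (split_prod _ _ phiA phiB); auto.
  - do 2 eexists. apply dom2_prod. apply dom_E; auto; lra. apply dom_sgE; auto; lra.
  - intros k l. cbn [phiA fst snd]. rewrite (E_fact' x 0 0 0 0 (k + l) (k - l) k l) by realeq. sgtac k l.
  - intros k l. cbn [phiB fst snd]. rewrite (E_fact' x 0 0 (/2) (/2) (k + l + 1) (k - l) k l) by realeq. sgtac k l.
  all: dE.
Qed.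

Lemma I4 : (zsum (E x (/2)) * zsum (E x 0) = aq * aq + zsum (E (2 * x) (3/4)) * zsum (E (2 * x) (3/4)))%C.
Proof. destruct (pairs_ok1 phiA phiB (or_introl (conj eq_refl eq_refl))) as (J1 & J2 & J3 & J4 & J5).
  apply (split_prod _ _ phiA phiB); auto.
  - do 2 eexists. apply dom2_prod; apply dom_E; auto; lra.
  - intros k l. cbn [phiA fst snd]. rewrite (E_fact' x (/2) 0 (/4) (/4) (k + l) (k - l) k l) by realeq. field. apply E_nz.
  - intros k l. cbn [phiB fst snd]. rewrite (E_fact' x (/2) 0 (3/4) (3/4) (k + l + 1) (k - l) k l) by realeq. field. apply E_nz.
  all: dE.
Qed.

Lemma I5 : (zsum (E x (/2)) * zsum (fun k => sg k * E x 0 k) =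
   sq * sq + zsum (fun k => sg k * E (2 * x) (3/4) k) * zsum (fun k => sg k * E (2 * x) (3/4) k))%C.
Proof. destruct (pairs_ok1 phiA phiB (or_introl (conj eq_refl eq_refl))) as (J1 & J2 & J3 & J4 & J5).
  apply (split_prod _ _ phiA phiB); auto.
  - do 2 eexists. apply dom2_prod. apply dom_E; auto; lra. apply dom_sgE; auto; lra.
  - intros k l. cbn [phiA fst snd]. rewrite (E_fact' x (/2) 0 (/4) (/4) (k + l) (k - l) k l) by realeq. sgtac k l.
  - intros k l. cbn [phiB fst snd]. rewrite (E_fact' x (/2) 0 (3/4) (3/4) (k + l + 1) (k - l) k l) by realeq. sgtac k l.
  all: dE.
Qed.

Lemma sym_c : zsum (fun k => sg k * E (2 * x) (/2) k)%C = 0%C.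
Proof. set (g := fun k => (sg k * E (2 * x) (/2) k)%C).
  assert (Hg : domex g) by dE.
  assert (H : zsum (fun k => g (-1 - k)%Z) = (- zsum g)%C).
  { rewrite <- zsum_opp' by auto. apply zsum_ext. intros k. unfold g, E.
    replace ((IZR (-1 - k) + / 2) ^ 2) with ((IZR k + / 2) ^ 2) by realeq.
    rewrite sg_sub. unfold sg at 1, sgR. simpl. unfold RtoC, Cmult, Copp. 
    destruct (sg k), (cexp _); simpl. f_equal; ring. }
  rewrite zsum_refl' in H by auto. fold g.
  assert (2 * zsum g = 0)%C by (replace (2 * zsum g)%C with (zsum g + zsum g)%C by ring; rewrite H at 2; ring).
  replace (zsum g) with (/2 * (2 * zsum g))%C by (field; intro E2; injection E2; lra).
  rewrite H0. ring. Qed.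

Lemma sym_q : zsum (E (2 * x) (3/4)) = aq.
Proof. unfold aq. rewrite <- (zsum_refl' (E (2 * x) (3/4))) by dE. apply zsum_ext. intros k.
  unfold E. f_equal. f_equal. f_equal. realeq. Qed.

Lemma sym_sq : zsum (fun k => sg k * E (2 * x) (3/4) k)%C = (- sq)%C.
Proof. unfold sq. rewrite <- zsum_opp' by dE.
  rewrite <- (zsum_refl' (fun k => sg k * E (2 * x) (3/4) k)%C) by dE. apply zsum_ext. intros k.
  unfold E. replace ((IZR (-1 - k) + 3 / 4) ^ 2) with ((IZR k + / 4) ^ 2) by realeq.
  rewrite sg_sub. unfold sg at 1, sgR. simpl. unfold RtoC, Cmult, Copp.
  destruct (sg k), (cexp _); simpl. f_equal; ring. Qed.
End OneVar.
Definition TGf (b11 b12 b21 b22 : C) (p1 p2 q1 q2 : bool) : Z -> Z -> C := fun m1 m2 =>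
    let v1 := (IZR m1 + half p1)%R in
    let v2 := (IZR m2 + half p2)%R in
    let Q := (b11 * RtoC (v1 * v1) + b12 * RtoC (v2 * v1)
           + b21 * RtoC (v1 * v2) + b22 * RtoC (v2 * v2))%C in
    cexp (PI * Ci * Q + 2 * PI * Ci * RtoC (v1 * half q1 + v2 * half q2))%C.

Lemma Theta_TG b11 b12 b21 b22 p1 p2 q1 q2 :
  Theta b11 b12 b21 b22 p1 p2 q1 q2 = z2sum (TGf b11 b12 b21 b22 p1 p2 q1 q2).
Proof. reflexivity. Qed.

Definition Bx (x y : C) := ((/2) * (x + y))%C.
Definition By (x y : C) := ((/2) * (x - y))%C.

Lemma arg_eq (x y : C) (v1 v2 w : R) :
  (PI * Ci * (Bx x y * RtoC (v1 * v1) + By x y * RtoC (v2 * v1) + By x y * RtoC (v1 * v2) + Bx x y * RtoC (v2 * v2))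
   + 2 * PI * Ci * RtoC w)%C =
  (PI * Ci * (2 * x) * RtoC (((v1 + v2) / 2) ^ 2) + PI * Ci * (2 * y) * RtoC (((v1 - v2) / 2) ^ 2)
   + Ci * RtoC (PI * (2 * w)))%C.
Proof. destruct x as [a b], y as [c d]. unfold Bx, By, Cminus, Copp. unfold RtoC, Cmult, Cplus, Cinv, Ci.
  cbn [fst snd]. f_equal; field. Qed.

Lemma TG_form x y p1 p2 q1 q2 m1 m2 :
  TGf (Bx x y) (By x y) (By x y) (Bx x y) p1 p2 q1 q2 m1 m2 =
  cexp (PI * Ci * (2 * x) * RtoC (((IZR m1 + half p1 + (IZR m2 + half p2)) / 2) ^ 2)
      + PI * Ci * (2 * y) * RtoC (((IZR m1 + half p1 - (IZR m2 + half p2)) / 2) ^ 2)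
      + Ci * RtoC (PI * (2 * ((IZR m1 + half p1) * half q1 + (IZR m2 + half p2) * half q2))))%C.
Proof. unfold TGf. cbv zeta. rewrite arg_eq. auto. Qed.

Lemma TG_fact x y p1 p2 q1 q2 m1 m2 k l h1 h2 j :
  (IZR m1 + half p1 + (IZR m2 + half p2)) / 2 = IZR k + h1 ->
  ((IZR m1 + half p1 - (IZR m2 + half p2)) / 2) ^ 2 = (IZR l + h2) ^ 2 ->
  2 * ((IZR m1 + half p1) * half q1 + (IZR m2 + half p2) * half q2) = IZR j ->
  TGf (Bx x y) (By x y) (By x y) (Bx x y) p1 p2 q1 q2 m1 m2 = (sg j * E (2 * x) h1 k * E (2 * y) h2 l)%C.
Proof. intros H1 H2 H3. rewrite TG_form, H1, H2, H3, cexp_shift, cexp_add. unfold E. ring. Qed.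

Lemma half_01 b : 0 <= half b <= 1.
Proof. destruct b; simpl; lra. Qed.

Lemma TG_dom x y p1 p2 q1 q2 : 0 < Im x -> 0 < Im y ->
  exists K s, dom2 (TGf (Bx x y) (By x y) (By x y) (Bx x y) p1 p2 q1 q2) K s.
Proof. intros hx hy. set (al := Rmin (Im x) (Im y)).
  assert (Hal : 0 < al) by (unfold al; apply Rmin_glb_lt; auto).
  assert (A1 : al <= Im x) by apply Rmin_l. assert (A2 : al <= Im y) by apply Rmin_r.
  exists (exp (PI * al) * exp (PI * al)), (exp (- (PI * al / 2))). split. apply ga_lt1; auto.
  split. apply Rlt_le, Rmult_lt_0_compat; apply exp_pos.
  intros m1 m2. rewrite TG_form, Cmod_cexp.
  set (v1 := IZR m1 + half p1). set (v2 := IZR m2 + half p2).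
  pose proof (gauss_le al (half p1) m1 Hal (half_01 p1)) as G1.
  pose proof (gauss_le al (half p2) m2 Hal (half_01 p2)) as G2. fold v1 in G1. fold v2 in G2.
  match goal with |- _ <= ?K * (?g1 * ?g1') * (?g2 * ?g2') =>
    replace (K * (g1 * g1') * (g2 * g2')) with ((exp (PI * al) * g1 * g1') * (exp (PI * al) * g2 * g2')) by ring end.
  eapply Rle_trans; [|apply Rmult_le_compat; [apply Rlt_le, exp_pos|apply Rlt_le, exp_pos|apply G1|apply G2]].
  rewrite <- exp_plus. apply exp_le'.
  replace (Re (PI * Ci * (2 * x) * RtoC (((v1 + v2) / 2) ^ 2) + PI * Ci * (2 * y) * RtoC (((v1 - v2) / 2) ^ 2)
    + Ci * RtoC (PI * (2 * (v1 * half q1 + v2 * half q2))))%C)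
    with (- (PI * (2 * Im x) * ((v1 + v2) / 2) ^ 2) - (PI * (2 * Im y) * ((v1 - v2) / 2) ^ 2)).
  2: { destruct x as [a b], y as [c d]. unfold Re, Im, RtoC, Cmult, Cplus, Ci. cbn [fst snd]. ring. }
  pose proof PI_RGT_0.
  assert (B : al * (v1 ^ 2 + v2 ^ 2) <= 2 * Im x * ((v1 + v2) / 2) ^ 2 + 2 * Im y * ((v1 - v2) / 2) ^ 2).
  { assert (C1 : 0 <= (Im x - al) * ((v1 + v2) / 2) ^ 2) by (apply Rmult_le_pos; [lra | apply pow2_ge_0]).
    assert (C2 : 0 <= (Im y - al) * ((v1 - v2) / 2) ^ 2) by (apply Rmult_le_pos; [lra | apply pow2_ge_0]).
    assert (C3 : ((v1 + v2) / 2) ^ 2 + ((v1 - v2) / 2) ^ 2 = (v1 ^ 2 + v2 ^ 2) / 2) by field.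
    nra. }
  nra. Qed.
Ltac dE2 := repeat apply domex_opp; first [ apply domex_E | apply domex_sgE ];
  [ first [ assumption | apply Im2; assumption ] | split; lra ].
Ltac tgeq := cbn [half]; rewrite ?plus_IZR, ?minus_IZR; field.
Ltac sgfin k l := rewrite ?sg_add, ?sg_sub; unfold sg, sgR;
  destruct (Z.even k), (Z.even l); simpl Z.even; cbv iota; ring.
Ltac pairsAB := destruct (pairs_ok1 phiA phiB (or_introl (conj eq_refl eq_refl))) as (J1 & J2 & J3 & J4 & J5).
Ltac pairsPsi := destruct (pairs_ok1 psiA psiB (or_intror (or_introl (conj eq_refl eq_refl)))) as (J1 & J2 & J3 & J4 & J5).
Ltac pairsAC := destruct (pairs_ok1 phiA phiC (or_intror (or_intror (conj eq_refl eq_refl)))) as (J1 & J2 & J3 & J4 & J5).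

Section TwoVar.
Variables x y : C.
Hypothesis hx : 0 < Im x.
Hypothesis hy : 0 < Im y.
Notation TH := (Theta (Bx x y) (By x y) (By x y) (Bx x y)).

Lemma Th1 : TH false false false false = (a0 x * a0 y + ah x * ah y)%C.
Proof. rewrite Theta_TG. pairsAB. apply (split_z2 _ phiA phiB); auto. apply TG_dom; auto.
  - intros k l. cbn [phiA fst snd].
    rewrite (TG_fact x y false false false false (k + l) (k - l) k l 0 0 0%Z) by tgeq. sgfin k l.
  - intros k l. cbn [phiB fst snd].
    rewrite (TG_fact x y false false false false (k + l + 1) (k - l) k l (/2) (/2) 0%Z) by tgeq. sgfin k l.
  all: dE2.
Qed.

Lemma Th2 : TH false false true true = (a0 x * a0 y - ah x * ah y)%C.
Proof. rewrite Theta_TG. pairsAB.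
  replace (a0 x * a0 y - ah x * ah y)%C with (a0 x * a0 y + zsum (fun k => - E (2 * x) (/2) k)%C * ah y)%C
    by (rewrite zsum_opp' by dE2; unfold ah; ring).
  apply (split_z2 _ phiA phiB); auto. apply TG_dom; auto.
  - intros k l. cbn [phiA fst snd].
    rewrite (TG_fact x y false false true true (k + l) (k - l) k l 0 0 (k + k)%Z) by tgeq. sgfin k l.
  - intros k l. cbn [phiB fst snd].
    rewrite (TG_fact x y false false true true (k + l + 1) (k - l) k l (/2) (/2) (k + k + 1)%Z) by tgeq. sgfin k l.
  all: dE2.
Qed.

Lemma Th3 : TH false false true false = (s0 x * s0 y)%C.
Proof. rewrite Theta_TG. pairsAB.
  replace (s0 x * s0 y)%C with (s0 x * s0 y + zsum (fun k => - (sg k * E (2 * x) (/2) k))%C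
      * zsum (fun k => sg k * E (2 * y) (/2) k)%C)%C by (rewrite (sym_c y hy); ring).
  apply (split_z2 _ phiA phiB); auto. apply TG_dom; auto.
  - intros k l. cbn [phiA fst snd].
    rewrite (TG_fact x y false false true false (k + l) (k - l) k l 0 0 (k + l)%Z) by tgeq. sgfin k l.
  - intros k l. cbn [phiB fst snd].
    rewrite (TG_fact x y false false true false (k + l + 1) (k - l) k l (/2) (/2) (k + l + 1)%Z) by tgeq. sgfin k l.
  all: dE2.
Qed.

Lemma Th4 : TH false false false true = (s0 x * s0 y)%C.
Proof. rewrite Theta_TG. pairsAB.
  replace (s0 x * s0 y)%C with (s0 x * s0 y + zsum (fun k => sg k * E (2 * x) (/2) k)%C
      * zsum (fun k => sg k * E (2 * y) (/2) k)%C)%C by (rewrite (sym_c y hy); ring).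
  apply (split_z2 _ phiA phiB); auto. apply TG_dom; auto.
  - intros k l. cbn [phiA fst snd].
    rewrite (TG_fact x y false false false true (k + l) (k - l) k l 0 0 (k - l)%Z) by tgeq. sgfin k l.
  - intros k l. cbn [phiB fst snd].
    rewrite (TG_fact x y false false false true (k + l + 1) (k - l) k l (/2) (/2) (k - l)%Z) by tgeq. sgfin k l.
  all: dE2.
Qed.

Lemma Th5 : TH true false false false = (2 * aq x * aq y)%C.
Proof. rewrite Theta_TG. pairsAB.
  replace (2 * aq x * aq y)%C with (aq x * aq y + zsum (E (2 * x) (3/4)) * zsum (E (2 * y) (3/4)))%C
    by (rewrite (sym_q x hx), (sym_q y hy); ring).
  apply (split_z2 _ phiA phiB); auto. apply TG_dom; auto.
  - intros k l. cbn [phiA fst snd].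
    rewrite (TG_fact x y true false false false (k + l) (k - l) k l (/4) (/4) 0%Z) by tgeq. sgfin k l.
  - intros k l. cbn [phiB fst snd].
    rewrite (TG_fact x y true false false false (k + l + 1) (k - l) k l (3/4) (3/4) 0%Z) by tgeq. sgfin k l.
  all: dE2.
Qed.

Lemma Th6 : TH true false false true = (2 * sq x * sq y)%C.
Proof. rewrite Theta_TG. pairsAB.
  replace (2 * sq x * sq y)%C with (sq x * sq y + zsum (fun k => sg k * E (2 * x) (3/4) k)%C
     * zsum (fun k => sg k * E (2 * y) (3/4) k)%C)%C
    by (rewrite (sym_sq x hx), (sym_sq y hy); ring).
  apply (split_z2 _ phiA phiB); auto. apply TG_dom; auto.
  - intros k l. cbn [phiA fst snd].
    rewrite (TG_fact x y true false false true (k + l) (k - l) k l (/4) (/4) (k - l)%Z) by tgeq. sgfin k l.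
  - intros k l. cbn [phiB fst snd].
    rewrite (TG_fact x y true false false true (k + l + 1) (k - l) k l (3/4) (3/4) (k - l)%Z) by tgeq. sgfin k l.
  all: dE2.
Qed.

Lemma Th7 : TH false true false false = (2 * aq x * aq y)%C.
Proof. rewrite Theta_TG. pairsPsi.
  replace (2 * aq x * aq y)%C with (aq x * aq y + zsum (E (2 * x) (3/4)) * zsum (E (2 * y) (3/4)))%C
    by (rewrite (sym_q x hx), (sym_q y hy); ring).
  apply (split_z2 _ psiA psiB); auto. apply TG_dom; auto.
  - intros k l. cbn [psiA fst snd].
    rewrite (TG_fact x y false true false false (k - l) (k + l) k l (/4) (/4) 0%Z) by tgeq. sgfin k l.
  - intros k l. cbn [psiB fst snd].
    rewrite (TG_fact x y false true false false (k - l) (k + l + 1) k l (3/4) (3/4) 0%Z) by tgeq. sgfin k l.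
  all: dE2.
Qed.

Lemma Th8 : TH false true true false = (2 * sq x * sq y)%C.
Proof. rewrite Theta_TG. pairsPsi.
  replace (2 * sq x * sq y)%C with (sq x * sq y + zsum (fun k => sg k * E (2 * x) (3/4) k)%C
     * zsum (fun k => sg k * E (2 * y) (3/4) k)%C)%C
    by (rewrite (sym_sq x hx), (sym_sq y hy); ring).
  apply (split_z2 _ psiA psiB); auto. apply TG_dom; auto.
  - intros k l. cbn [psiA fst snd].
    rewrite (TG_fact x y false true true false (k - l) (k + l) k l (/4) (/4) (k - l)%Z) by tgeq. sgfin k l.
  - intros k l. cbn [psiB fst snd].
    rewrite (TG_fact x y false true true false (k - l) (k + l + 1) k l (3/4) (3/4) (k - l)%Z) by tgeq. sgfin k l.
  all: dE2.
Qed.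

Lemma Th9 : TH true true false false = (ah x * a0 y + a0 x * ah y)%C.
Proof. rewrite Theta_TG. pairsAC. apply (split_z2 _ phiA phiC); auto. apply TG_dom; auto.
  - intros k l. cbn [phiA fst snd].
    rewrite (TG_fact x y true true false false (k + l) (k - l) k l (/2) 0 0%Z) by tgeq. sgfin k l.
  - intros k l. cbn [phiC fst snd].
    rewrite (TG_fact x y true true false false (k + l) (k - l - 1) k l 0 (/2) 0%Z) by tgeq. sgfin k l.
  all: dE2.
Qed.

Lemma Th10 : TH true true true true = (- (ah x * a0 y) + a0 x * ah y)%C.
Proof. rewrite Theta_TG. pairsAC.
  replace (- (ah x * a0 y) + a0 x * ah y)%C with (zsum (fun k => - E (2 * x) (/2) k)%C * a0 y + a0 x * ah y)%C
    by (rewrite zsum_opp' by dE2; unfold ah; ring).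
  apply (split_z2 _ phiA phiC); auto. apply TG_dom; auto.
  - intros k l. cbn [phiA fst snd].
    rewrite (TG_fact x y true true true true (k + l) (k - l) k l (/2) 0 (k + k + 1)%Z) by tgeq. sgfin k l.
  - intros k l. cbn [phiC fst snd].
    rewrite (TG_fact x y true true true true (k + l) (k - l - 1) k l 0 (/2) (k + k)%Z) by tgeq. sgfin k l.
  all: dE2.
Qed.
End TwoVar.
Lemma theta2_E x : theta2 x = zsum (E x (/2)).
Proof. reflexivity. Qed.
Lemma theta3_E x : theta3 x = zsum (E x 0).
Proof. apply zsum_ext. intros n. unfold E. rewrite Rplus_0_r. auto. Qed.
Lemma theta4_E x : theta4 x = zsum (fun k => sg k * E x 0 k)%C.
Proof. apply zsum_ext. intros n. unfold E, sg. rewrite Rplus_0_r, powerRZ_m1. auto. Qed.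

Lemma rpow_pos a y : 0 < a -> rpow a y = Rpower a y.
Proof. intros H. unfold rpow. destruct (Rlt_dec 0 a); [auto|lra]. Qed.

Lemma fmod3 x : 0 < Im x ->
  fmod x ^ 3 * Im x = Rpower (Im x) (5/2) * Cmod (theta2 x * theta3 x * theta4 x) ^ 2.
Proof. intros hx. unfold fmod. rewrite rpow_pos by auto.
  assert (A : Rpower (Im x) (1/2) ^ 3 * Im x = Rpower (Im x) (5/2)).
  { rewrite <- (Rpower_pow 3) by apply exp_pos. rewrite Rpower_mult.
    rewrite <- (Rpower_1 (Im x)) at 2 by auto. rewrite <- Rpower_plus. f_equal. simpl. field. }
  assert (B : rpow (Cmod (theta2 x * theta3 x * theta4 x)) (2/3) ^ 3 = Cmod (theta2 x * theta3 x * theta4 x) ^ 2).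
  { set (c := Cmod (theta2 x * theta3 x * theta4 x)). pose proof (Cmod_ge_0 (theta2 x * theta3 x * theta4 x)).
    fold c in H. destruct H as [H|H].
    - rewrite rpow_pos by auto. rewrite <- (Rpower_pow 3) by apply exp_pos. rewrite Rpower_mult.
      rewrite <- (Rpower_pow 2) by auto. f_equal. simpl. field.
    - rewrite <- H. unfold rpow. destruct (Rlt_dec 0 0); [lra|]. simpl. ring. }
  rewrite Rpow_mult_distr, B. rewrite <- A. ring. Qed.
Theorem lemma5 (x y : C) (hx : 0 < Im x) (hy : 0 < Im y) :
  calF ((/2) * (x + y))%C ((/2) * (x - y))%C ((/2) * (x - y))%C ((/2) * (x + y))%C
  = / 4 * fmod x ^ 3 * fmod y ^ 3 * Im x * Im y *
    Cmod (theta3 x ^ 4 * theta4 y ^ 4 - theta4 x ^ 4 * theta3 y ^ 4)%C.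
Proof.
  change ((/2) * (x + y))%C with (Bx x y). change ((/2) * (x - y))%C with (By x y).
  unfold calF.
  set (TH := Theta (Bx x y) (By x y) (By x y) (Bx x y)).
  match goal with |- context [fold_right Rmult 1 ?L] =>
    replace (fold_right Rmult 1 L) with
      (Cmod (TH true true true true * TH true true false false * TH true false false true *
             TH true false false false * TH false true true false * TH false true false false *
             TH false false true true * TH false false true false * TH false false false true *
             TH false false false false)%C) end.
  2: { unfold even_chars, all_chars. cbn [filter flat_map map fold_right even_char app negb xorb andb].
       rewrite !Cmod_mult. ring. }
  unfold TH. rewrite (Th1 x y hx hy), (Th2 x y hx hy), (Th3 x y hx hy), (Th4 x y hx hy), (Th5 x y hx hy),
    (Th6 x y hx hy), (Th7 x y hx hy), (Th8 x y hx hy), (Th9 x y hx hy), (Th10 x y hx hy).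
  set (D := (theta3 x ^ 4 * theta4 y ^ 4 - theta4 x ^ 4 * theta3 y ^ 4)%C).
  set (X := (theta2 x * theta3 x * theta4 x)%C). set (Y := (theta2 y * theta3 y * theta4 y)%C).
  assert (HC : ((- (ah x * a0 y) + a0 x * ah y) * (ah x * a0 y + a0 x * ah y) * (2 * sq x * sq y) *
     (2 * aq x * aq y) * (2 * sq x * sq y) * (2 * aq x * aq y) * (a0 x * a0 y - ah x * ah y) *
     (s0 x * s0 y) * (s0 x * s0 y) * (a0 x * a0 y + ah x * ah y))%C
     = (RtoC (- / 4) * (X * X) * (Y * Y) * D)%C).
  { unfold X, Y, D. rewrite !theta2_E, !theta3_E, !theta4_E.
    set (t2x := zsum (E x (/2))). set (t3x := zsum (E x 0)). set (t4x := zsum (fun k => sg k * E x 0 k)%C).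
    set (t2y := zsum (E y (/2))). set (t3y := zsum (E y 0)). set (t4y := zsum (fun k => sg k * E y 0 k)%C).
    pose proof (I1 x hx) as I1x. pose proof (I2 x hx) as I2x. pose proof (I3 x hx) as I3x.
    pose proof (I4 x hx) as I4x. pose proof (I5 x hx) as I5x.
    pose proof (I1 y hy) as I1y. pose proof (I2 y hy) as I2y. pose proof (I3 y hy) as I3y.
    pose proof (I4 y hy) as I4y. pose proof (I5 y hy) as I5y.
    rewrite (sym_c x hx) in I3x. rewrite (sym_c y hy) in I3y.
    rewrite (sym_q x hx) in I4x. rewrite (sym_q y hy) in I4y.
    rewrite (sym_sq x hx) in I5x. rewrite (sym_sq y hy) in I5y.
    fold t2x t3x t4x in I1x, I2x, I3x, I4x, I5x. fold t2y t3y t4y in I1y, I2y, I3y, I4y, I5y.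
    symmetry.
    transitivity (RtoC (- / 4) * ((t2x * t3x) * (t2x * t4x) * (t3x * t4x)) *
       ((t2y * t3y) * (t2y * t4y) * (t3y * t4y)) *
       ((t3x * t3x) * (t3x * t3x) * ((t4y * t4y) * (t4y * t4y)) -
        (t4x * t4x) * (t4x * t4x) * ((t3y * t3y) * (t3y * t3y))))%C.
    { ring. }
    rewrite I1x, I2x, I3x, I4x, I5x, I1y, I2y, I3y, I4y, I5y.
    replace (RtoC (- / 4)) with (- / 4)%C. field.
    unfold RtoC, Copp, Cinv. cbn [fst snd]. f_equal; field. }
  rewrite HC. rewrite !Cmod_mult, Cmod_R.
  rewrite Rabs_left by lra.
  assert (Hd : Im (Bx x y) * Im (Bx x y) - Im (By x y) * Im (By x y) = Im x * Im y).
  { destruct x as [a b], y as [c d]. unfold Bx, By, Im, Cminus, Copp. unfold Cmult, Cplus, Cinv, RtoC.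
    cbn [fst snd]. field. }
  rewrite Hd. rewrite rpow_pos by (apply Rmult_lt_0_compat; auto).
  rewrite <- Rpower_mult_distr by auto.
  assert (Fx := fmod3 x hx). assert (Fy := fmod3 y hy). fold X in Fx. fold Y in Fy.
  replace (/ 4 * fmod x ^ 3 * fmod y ^ 3 * Im x * Im y * Cmod D)
    with (/ 4 * (fmod x ^ 3 * Im x) * (fmod y ^ 3 * Im y) * Cmod D) by ring.
  rewrite Fx, Fy. simpl. ring. Qed.
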